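(* Let $D$ be a $\ast$-SH domain and let $I$ be a proper integral $\ast$-invertible $\ast$-ideal of $D$. Then $I$ is expressible, uniquely up to order, as a $\ast$-product of finitely many mutually $\ast$-comaximal $\ast$-homog ideals.
   Context: $\ast$ is a star operation on the integral domain $D$ of finite character. A $\ast$-ideal is a nonzero fractional ideal $I$ with $I^\ast=I$; of finite type if $I=J^\ast$ for some nonzero finitely generated $J$. A maximal $\ast$-ideal is an integral $\ast$-ideal maximal among proper integral $\ast$-ideals. $I$ is $\ast$-invertible if $(II^{-1})^\ast=D$. Ideals $A,B$ are $\ast$-comaximal if $(A+B)^\ast=D$. A $\ast$-homog ideal is a proper integral $\ast$-ideal $I$ of finite type such that $(A+B)^\ast\neq D$ for every pair $A,B$ of proper integral $\ast$-ideals of finite type containing $I$. $D$ is a $\ast$-SH domain if for every nonzero nonunit $x$, $xD=(I_1\cdots I_n)^\ast$ for finitely many $\ast$-homog ideals $I_i$. *)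

(* Defs.v *)
(* An integral domain D is modelled as a subring D of a
   field K such that K is the quotient field of D.  Subsets of K
   (fractional ideals, etc.) are predicates K -> Prop; equality of such
   subsets is extensional equality [seteq]. *)
From mathcomp Require Import all_boot all_order all_algebra.
Set Implicit Arguments. Unset Strict Implicit. Unset Printing Implicit Defensive.
Import GRing.Theory.
Local Open Scope ring_scope.

Section StarDefs.
Variable K : fieldType.
Variable D : K -> Prop.

Definition subset (A B : K -> Prop) := forall x, A x -> B x.
Definition seteq (A B : K -> Prop) := subset A B /\ subset B A.

Definition is_domain_with_qf : Prop :=
  [/\ D 0, D 1,
      (forall a b, D a -> D b -> D (a - b)),
      (forall a b, D a -> D b -> D (a * b)) &
      (forall x : K, exists a b, [/\ D a, D b, b != 0 & x = a / b])].

Definition submodule (I : K -> Prop) : Prop :=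
  [/\ I 0, (forall a b, I a -> I b -> I (a + b)) &
      (forall d a, D d -> I a -> I (d * a))].

Definition frac_ideal (I : K -> Prop) : Prop :=
  [/\ submodule I, (exists x, I x /\ x != 0) &
      (exists d, [/\ D d, d != 0 & forall x, I x -> D (d * x)])].

Definition principal (x : K) : K -> Prop := fun y => exists d, D d /\ y = d * x.
Definition scale (x : K) (I : K -> Prop) : K -> Prop :=
  fun y => exists z, I z /\ y = x * z.

Definition gen (s : seq K) : K -> Prop :=
  fun z => forall S, submodule S -> (forall a, a \in s -> S a) -> S z.
Definition fin_gen (I : K -> Prop) : Prop := exists s : seq K, seteq I (gen s).

Definition iprod (I J : K -> Prop) : K -> Prop :=
  fun z => forall S, submodule S -> (forall a b, I a -> J b -> S (a * b)) -> S z.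
Definition isum (I J : K -> Prop) : K -> Prop :=
  fun z => exists a b, [/\ I a, J b & z = a + b].
Fixpoint iprodn (n : nat) (F : nat -> K -> Prop) : K -> Prop :=
  match n with 0%N => D | m.+1 => iprod (iprodn m F) (F m) end.

Definition inv (I : K -> Prop) : K -> Prop := fun x => forall y, I y -> D (x * y).

Definition is_star_op (star : (K -> Prop) -> (K -> Prop)) : Prop :=
  (forall I, frac_ideal I -> frac_ideal (star I)) /\
  [/\ (forall x, x != 0 -> seteq (star (principal x)) (principal x)),
      (forall x I, x != 0 -> frac_ideal I -> seteq (star (scale x I)) (scale x (star I))),
      (forall I, frac_ideal I -> subset I (star I)),
      (forall I J, frac_ideal I -> frac_ideal J -> subset I J -> subset (star I) (star J)) &
      (forall I, frac_ideal I -> seteq (star (star I)) (star I))].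

Definition finite_character (star : (K -> Prop) -> (K -> Prop)) : Prop :=
  forall I, frac_ideal I ->
    seteq (star I)
          (fun x => exists J, [/\ frac_ideal J, fin_gen J, subset J I & star J x]).

Variable star : (K -> Prop) -> (K -> Prop).

Definition star_ideal (I : K -> Prop) := frac_ideal I /\ seteq (star I) I.
Definition finite_type (I : K -> Prop) :=
  star_ideal I /\ exists J, [/\ frac_ideal J, fin_gen J & seteq I (star J)].
Definition integral (I : K -> Prop) := subset I D.
(* a proper integral ideal: integral and different from D, i.e. 1 not in I *)
Definition proper_integral (I : K -> Prop) := integral I /\ ~ I 1.

Definition star_invertible (I : K -> Prop) := seteq (star (iprod I (inv I))) D.
Definition star_comaximal (A B : K -> Prop) := seteq (star (isum A B)) D.

Definition star_homog (I : K -> Prop) : Prop :=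
  [/\ proper_integral I, star_ideal I, finite_type I &
      forall A B, proper_integral A -> star_ideal A -> finite_type A ->
                  proper_integral B -> star_ideal B -> finite_type B ->
                  subset I A -> subset I B -> ~ star_comaximal A B].

Definition star_SH : Prop :=
  forall x, D x -> x != 0 -> ~ D x^-1 ->
    exists (n : nat) (F : nat -> K -> Prop),
      (forall i, (i < n)%N -> star_homog (F i)) /\
      seteq (principal x) (star (iprodn n F)).

Definition homog_factorization (I : K -> Prop) (n : nat) (F : nat -> K -> Prop) : Prop :=
  [/\ (forall i, (i < n)%N -> star_homog (F i)),
      (forall i j, (i < n)%N -> (j < n)%N -> i <> j -> star_comaximal (F i) (F j)) &
      seteq I (star (iprodn n F))].

End StarDefs.

(* Main.v *)
Require Import Defs.
From mathcomp Require Import all_boot all_order all_algebra ring.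
From Stdlib Require Import Classical ClassicalEpsilon.
Set Implicit Arguments. Unset Strict Implicit. Unset Printing Implicit Defensive.
Import GRing.Theory.
Local Open Scope ring_scope.

Section Main.
Variable K : fieldType.
Variable D : K -> Prop.
Variable star : (K -> Prop) -> (K -> Prop).
Hypothesis hD : is_domain_with_qf D.
Hypothesis hstar : is_star_op D star.

Local Notation sub := (@Defs.subset K).
Local Notation seq_ := (@Defs.seteq K).
Local Notation frac := (frac_ideal D).
Local Notation smod := (submodule D).

Lemma D0 : D 0. Proof. by case: hD. Qed.
Lemma D1 : D 1. Proof. by case: hD. Qed.
Lemma DB a b : D a -> D b -> D (a - b). Proof. by case: hD => _ _ h _ _; apply: h. Qed.
Lemma DM a b : D a -> D b -> D (a * b). Proof. by case: hD => _ _ _ h _; apply: h. Qed.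
Lemma DN a : D a -> D (- a). Proof. by move=> ha; rewrite -sub0r; apply: DB => //; apply: D0. Qed.
Lemma DD a b : D a -> D b -> D (a + b).
Proof. by move=> ha hb; rewrite -(opprK b); apply: DB => //; apply: DN. Qed.

Lemma sbrefl A : sub A A. Proof. by []. Qed.
Lemma sbtrans A B C : sub A B -> sub B C -> sub A C.
Proof. by move=> h1 h2 x /h1 /h2. Qed.
Lemma sqrefl A : seq_ A A. Proof. by split. Qed.
Lemma sqsym A B : seq_ A B -> seq_ B A. Proof. by case. Qed.
Lemma sqtrans A B C : seq_ A B -> seq_ B C -> seq_ A C.
Proof. by case=> h1 h2 [h3 h4]; split; apply: sbtrans; eauto. Qed.

Lemma submod_D : submodule D D.
Proof. split; [exact: D0 | exact: DD | move=> d a; exact: DM]. Qed.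

Lemma frac_D : frac_ideal D D.
Proof.
split; first exact: submod_D.
  by exists 1; split; [exact: D1 | exact: oner_neq0].
by exists 1; split; [exact: D1 | exact: oner_neq0 | move=> x; rewrite mul1r].
Qed.

Lemma submod_seteq I J : submodule D I -> seq_ I J -> submodule D J.
Proof.
case=> h0 hp hm [s1 s2]; split; first exact: s1.
- by move=> a b /s2 ha /s2 hb; apply: s1; apply: hp.
- by move=> d a hd /s2 ha; apply: s1; apply: hm.
Qed.

Lemma frac_seteq I J : frac_ideal D I -> seq_ I J -> frac_ideal D J.
Proof.
case=> hs [x [hx hx0]] [d [hd hd0 hb]] [s1 s2]; split.
- exact: submod_seteq hs (conj s1 s2).
- by exists x; split; [exact: s1|].
- by exists d; split => // y /s2; apply: hb.
Qed.

Lemma frac_sub I : frac_ideal D I -> submodule D I. Proof. by case. Qed.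
Lemma sm0 I : submodule D I -> I 0. Proof. by case. Qed.
Lemma smD I a b : submodule D I -> I a -> I b -> I (a + b).
Proof. by case=> _ h _; apply: h. Qed.
Lemma smM I d a : submodule D I -> D d -> I a -> I (d * a).
Proof. by case=> _ _ h; apply: h. Qed.
Lemma smMr I d a : submodule D I -> D d -> I a -> I (a * d).
Proof. by move=> hI hd ha; rewrite mulrC; apply: smM. Qed.

Lemma star_frac I : frac_ideal D I -> frac_ideal D (star I).
Proof. by case: hstar => h _; apply: h. Qed.
Lemma star_ext I : frac_ideal D I -> sub I (star I).
Proof. by case: hstar => _ [_ _ h _ _]; apply: h. Qed.
Lemma star_mono I J : frac_ideal D I -> frac_ideal D J -> sub I J -> sub (star I) (star J).
Proof. by case: hstar => _ [_ _ _ h _]; apply: h. Qed.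
Lemma star_idem I : frac_ideal D I -> seq_ (star (star I)) (star I).
Proof. by case: hstar => _ [_ _ _ _ h]; apply: h. Qed.
Lemma star_seteq I J : frac_ideal D I -> seq_ I J -> seq_ (star I) (star J).
Proof.
move=> hI [s1 s2]; have hJ := frac_seteq hI (conj s1 s2).
by split; apply: star_mono.
Qed.
Lemma star_sub I : frac_ideal D I -> submodule D (star I).
Proof. by move/star_frac; case. Qed.

Lemma principal1 : seq_ (principal D 1) D.
Proof.
split; first by move=> y [d [hd ->]]; rewrite mulr1.
by move=> y hy; exists y; rewrite mulr1.
Qed.

Lemma star_D : seq_ (star D) D.
Proof.
have h1 : frac_ideal D (principal D 1) by apply: frac_seteq frac_D (sqsym principal1).
apply: sqtrans (star_seteq frac_D (sqsym principal1)) _.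
apply: sqtrans principal1.
by case: hstar => _ [h _ _ _ _]; apply: h; exact: oner_neq0.
Qed.

Lemma star_integral I : frac_ideal D I -> integral D I -> integral D (star I).
Proof.
move=> hI hi x hx; apply: (proj1 star_D); exact: star_mono hI frac_D hi x hx.
Qed.

Lemma star_star_ideal I : frac_ideal D I -> star_ideal D star (star I).
Proof. by move=> h; split; [exact: star_frac | exact: star_idem]. Qed.

Lemma D_of_1 I : submodule D I -> integral D I -> I 1 -> seq_ I D.
Proof. by move=> hs hi h1; split => // x hx; rewrite -(mulr1 x); apply: smM. Qed.


Lemma submod_isum I J : smod I -> smod J -> smod (isum I J).
Proof.
move=> hI hJ; split.
- by exists 0, 0; split; [exact: sm0 hI | exact: sm0 hJ | rewrite addr0].
- move=> _ _ [a1 [b1 [ha1 hb1 ->]]] [a2 [b2 [ha2 hb2 ->]]].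
  exists (a1 + a2), (b1 + b2); by split; [apply: smD|apply: smD|by rewrite addrACA].
- move=> d _ hd [a [b [ha hb ->]]]; exists (d * a), (d * b).
  by split; [apply: smM|apply: smM|rewrite mulrDr].
Qed.

Lemma isum_l I J : J 0 -> sub I (isum I J).
Proof. by move=> h0 x hx; exists x, 0; split => //; rewrite addr0. Qed.
Lemma isum_r I J : I 0 -> sub J (isum I J).
Proof. by move=> h0 x hx; exists 0, x; split => //; rewrite add0r. Qed.
Lemma isum_lub I J S : smod S -> sub I S -> sub J S -> sub (isum I J) S.
Proof. by move=> hS h1 h2 _ [a [b [ha hb ->]]]; apply: smD => //; auto. Qed.
Lemma isum_mono I I' J J' : sub I I' -> sub J J' -> sub (isum I J) (isum I' J').
Proof. by move=> h1 h2 _ [a [b [ha hb ->]]]; exists a, b; split; auto. Qed.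
Lemma isum_comm I J : seq_ (isum I J) (isum J I).
Proof. by split=> _ [a [b [ha hb ->]]]; exists b, a; split => //; rewrite addrC. Qed.
Lemma isum_seteq I I' J J' : seq_ I I' -> seq_ J J' -> seq_ (isum I J) (isum I' J').
Proof. by case=> a1 a2 [b1 b2]; split; apply: isum_mono. Qed.

Lemma frac_isum I J : frac I -> frac J -> frac (isum I J).
Proof.
move=> hI hJ; have [sI [x [hx hx0]] [d1 [hd1 hd10 hb1]]] := hI.
have [sJ _ [d2 [hd2 hd20 hb2]]] := hJ.
split; first exact: submod_isum.
  by exists x; split => //; apply: isum_l => //; apply: sm0.
exists (d1 * d2); split; [exact: DM | exact: mulf_neq0 |].
move=> _ [a [b [ha hb ->]]].
have -> : d1 * d2 * (a + b) = d2 * (d1 * a) + d1 * (d2 * b) by ring.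
by apply: DD => //; apply: DM => //; auto.
Qed.

Lemma integral_isum I J : smod D -> integral D I -> integral D J -> integral D (isum I J).
Proof. by move=> _ h1 h2; apply: isum_lub => //; apply: submod_D. Qed.

Lemma iprod_mul I J a b : I a -> J b -> iprod D I J (a * b).
Proof. by move=> ha hb S hS h; apply: h. Qed.
Lemma submod_iprod I J : smod (iprod D I J).
Proof.
split.
- by move=> S hS _; apply: sm0.
- by move=> a b ha hb S hS h; apply: smD => //; [apply: ha | apply: hb].
- by move=> d a hd ha S hS h; apply: smM => //; apply: ha.
Qed.
Lemma iprod_lub I J S : smod S -> (forall a b, I a -> J b -> S (a * b)) -> sub (iprod D I J) S.
Proof. by move=> hS h z hz; apply: hz. Qed.
Lemma submod_mulr S c : smod S -> smod (fun z => S (z * c)).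
Proof.
move=> hS; split.
- by rewrite mul0r; apply: sm0.
- by move=> a b ha hb; rewrite mulrDl; apply: smD.
- by move=> d a hd ha; rewrite -mulrA; apply: smM.
Qed.
Lemma submod_mull S c : smod S -> smod (fun z => S (c * z)).
Proof.
move=> hS; split.
- by rewrite mulr0; apply: sm0.
- by move=> a b ha hb; rewrite mulrDr; apply: smD.
- by move=> d a hd ha; rewrite mulrCA; apply: smM.
Qed.
Lemma iprod_mono I I' J J' : sub I I' -> sub J J' -> sub (iprod D I J) (iprod D I' J').
Proof.
move=> h1 h2; apply: iprod_lub; first exact: submod_iprod.
by move=> a b ha hb; apply: iprod_mul; auto.
Qed.
Lemma iprod_seteq I I' J J' : seq_ I I' -> seq_ J J' -> seq_ (iprod D I J) (iprod D I' J').
Proof. by case=> a1 a2 [b1 b2]; split; apply: iprod_mono. Qed.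
Lemma iprod_comm I J : seq_ (iprod D I J) (iprod D J I).
Proof.
by split; apply: iprod_lub; (try exact: submod_iprod) => a b ha hb;
  rewrite mulrC; apply: iprod_mul.
Qed.
Lemma iprod_assoc I J L : seq_ (iprod D (iprod D I J) L) (iprod D I (iprod D J L)).
Proof.
split.
- apply: iprod_lub; first exact: submod_iprod.
  move=> z c hz hc; apply: (iprod_lub (S := fun z => iprod D I (iprod D J L) (z * c))) hz.
    exact/submod_mulr/submod_iprod.
  by move=> a b ha hb; rewrite -mulrA; apply: iprod_mul => //; apply: iprod_mul.
- apply: iprod_lub; first exact: submod_iprod.
  move=> a w ha hw; apply: (iprod_lub (S := fun w => iprod D (iprod D I J) L (a * w))) hw.
    exact/submod_mull/submod_iprod.
  by move=> b c hb hc; rewrite mulrA; apply: iprod_mul => //; apply: iprod_mul.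
Qed.
Lemma iprod_D I : smod I -> seq_ (iprod D I D) I.
Proof.
move=> hI; split.
- by apply: iprod_lub => // a d ha hd; apply: smMr.
- by move=> x hx; rewrite -(mulr1 x); apply: iprod_mul => //; apply: D1.
Qed.
Lemma iprod_D_l I : smod I -> seq_ (iprod D D I) I.
Proof. by move=> hI; apply: sqtrans (iprod_comm _ _) (iprod_D hI). Qed.
Lemma iprod_sub_l I J : smod I -> integral D J -> sub (iprod D I J) I.
Proof. by move=> hI hJ; apply: iprod_lub => // a b ha hb; apply: smMr => //; apply: hJ. Qed.
Lemma iprod_sub_r I J : integral D I -> smod J -> sub (iprod D I J) J.
Proof. by move=> hI hJ; apply: iprod_lub => // a b ha hb; apply: smM => //; apply: hI. Qed.
Lemma integral_iprod I J : integral D I -> integral D J -> integral D (iprod D I J).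
Proof.
move=> h1 h2; apply: iprod_lub; first exact: submod_D.
by move=> a b ha hb; apply: DM; auto.
Qed.
Lemma frac_iprod I J : frac I -> frac J -> frac (iprod D I J).
Proof.
move=> hI hJ; have [sI [x [hx hx0]] [d1 [hd1 hd10 hb1]]] := hI.
have [sJ [y [hy hy0]] [d2 [hd2 hd20 hb2]]] := hJ.
split; first exact: submod_iprod.
  by exists (x * y); split; [apply: iprod_mul | exact: mulf_neq0].
exists (d1 * d2); split; [exact: DM | exact: mulf_neq0 |].
apply: iprod_lub.
  split; first by rewrite mulr0; apply: D0.
  - by move=> a b ha hb; rewrite mulrDr; apply: DD.
  - by move=> d a hd ha; rewrite mulrCA; apply: DM.
by move=> a b ha hb; rewrite mulrACA; apply: DM; auto.
Qed.

Lemma iprod_isum_distr X Y Z :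
  sub (iprod D X (isum Y Z)) (isum (iprod D X Y) (iprod D X Z)).
Proof.
apply: iprod_lub; first by apply: submod_isum; apply: submod_iprod.
move=> a _ ha [y [z [hy hz ->]]]; exists (a * y), (a * z).
by split; [apply: iprod_mul | apply: iprod_mul | rewrite mulrDr].
Qed.

Lemma distr2 I P Q : smod I -> smod P -> smod Q ->
  sub (iprod D I (isum P Q)) (iprod D (isum I P) (isum I Q)).
Proof.
move=> hI hP hQ; apply: iprod_lub; first exact: submod_iprod.
move=> a _ ha [p [q [hp hq ->]]].
have -> : a * (p + q) = p * a + a * q by ring.
apply: (@smD (iprod D (isum I P) (isum I Q))); first exact: submod_iprod.
- by apply: iprod_mul; [apply: isum_r; first apply: sm0 | apply: isum_l; first apply: sm0].
- by apply: iprod_mul; [apply: isum_l; first apply: sm0 | apply: isum_r; first apply: sm0].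
Qed.

Lemma distr3 I P Q : smod I -> integral D I -> integral D P -> integral D Q ->
  sub (iprod D (isum I P) (isum I Q)) (isum I (iprod D P Q)).
Proof.
move=> hI hIi hP hQ; apply: iprod_lub; first exact/submod_isum/submod_iprod.
move=> _ _ [a [p [ha hp ->]]] [b [q [hb hq ->]]].
exists (a * (b + q) + p * b), (p * q); split.
- apply: smD => //; first by apply: smMr => //; apply: DD; auto.
  by apply: smM => //; auto.
- exact: iprod_mul.
- by ring.
Qed.

Lemma frac_scale x I : x != 0 -> frac I -> frac (scale x I).
Proof.
move=> hx0 [sI [y [hy hy0]] [d [hd hd0 hb]]]; split.
- split.
  + by exists 0; split; [apply: sm0 | rewrite mulr0].
  + move=> _ _ [z1 [h1 ->]] [z2 [h2 ->]]; exists (z1 + z2).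
    by split; [apply: smD | rewrite mulrDr].
  + move=> e _ he [z [hz ->]]; exists (e * z); by split; [apply: smM | rewrite mulrCA].
- exists (x * y); split; [exists y; by split | exact: mulf_neq0].
- case: hD => _ _ _ _ hq; have [a [b [ha hbb hb0 hx]]] := hq x.
  exists (b * d); split; [exact: DM | exact: mulf_neq0 |].
  move=> _ [z [hz ->]].
  have -> : b * d * (x * z) = (b * x) * (d * z) by ring.
  have -> : b * x = a by rewrite hx mulrC divfK.
  by apply: DM; auto.
Qed.

Lemma star_prod_r X Y : frac X -> frac Y ->
  seq_ (star (iprod D X (star Y))) (star (iprod D X Y)).
Proof.
move=> hX hY.
have hXY := frac_iprod hX hY.
have hXsY := frac_iprod hX (star_frac hY).
split; last first.
  apply: (star_mono hXY hXsY); apply: iprod_mono. exact: sbrefl. exact (star_ext hY).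
suff h : sub (iprod D X (star Y)) (star (iprod D X Y)).
  move=> z hz; apply: (proj1 (star_idem hXY)).
  by apply: (star_mono hXsY (star_frac hXY) h).
apply: iprod_lub; first exact: star_sub.
move=> a b ha hb; have [->|ha0] := eqVneq a 0.
  by rewrite mul0r; apply: sm0; apply: star_sub.
have hs : scale a (star Y) (a * b) by exists b.
case: hstar => _ [_ hsc _ _ _].
have := proj2 (hsc a Y ha0 hY) _ hs.
apply: (star_mono (frac_scale ha0 hY) hXY).
by move=> _ [y [hy ->]]; apply: iprod_mul.
Qed.

Lemma star_prod_l X Y : frac X -> frac Y ->
  seq_ (star (iprod D (star X) Y)) (star (iprod D X Y)).
Proof.
move=> hX hY.
apply: sqtrans (star_seteq (frac_iprod (star_frac hX) hY) (iprod_comm _ _)) _.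
apply: sqtrans (star_prod_r hY hX) _.
exact (star_seteq (frac_iprod hY hX) (iprod_comm _ _)).
Qed.

Lemma star_sum_r X Y : frac X -> frac Y ->
  seq_ (star (isum X (star Y))) (star (isum X Y)).
Proof.
move=> hX hY.
have hXY := frac_isum hX hY.
have hXsY := frac_isum hX (star_frac hY).
split; last first.
  apply: (star_mono hXY hXsY); apply: isum_mono. exact: sbrefl. exact (star_ext hY).
suff h : sub (isum X (star Y)) (star (isum X Y)).
  move=> z hz; apply: (proj1 (star_idem hXY)).
  by apply: (star_mono hXsY (star_frac hXY) h).
apply: isum_lub; first exact: star_sub.
- apply: sbtrans (star_ext hXY); apply: isum_l; apply: sm0; by case: hY.
- apply: (star_mono hY hXY); apply: isum_r; apply: sm0; by case: hX.
Qed.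

Lemma star_sum_l X Y : frac X -> frac Y ->
  seq_ (star (isum (star X) Y)) (star (isum X Y)).
Proof.
move=> hX hY.
apply: sqtrans (star_seteq (frac_isum (star_frac hX) hY) (isum_comm _ _)) _.
apply: sqtrans (star_sum_r hY hX) _.
exact (star_seteq (frac_isum hY hX) (isum_comm _ _)).
Qed.



Lemma submod_gen s : smod (gen D s).
Proof.
split.
- by move=> S hS _; apply: sm0.
- by move=> a b ha hb S hS h; apply: smD => //; [apply: ha | apply: hb].
- by move=> d a hd ha S hS h; apply: smM => //; apply: ha.
Qed.
Lemma gen_in s a : a \in s -> gen D s a.
Proof. by move=> ha S hS h; apply: h. Qed.
Lemma gen_lub s S : smod S -> (forall a, a \in s -> S a) -> sub (gen D s) S.
Proof. by move=> hS h z hz; apply: hz. Qed.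

Lemma gen_cat s t : seq_ (gen D (s ++ t)) (isum (gen D s) (gen D t)).
Proof.
split.
- apply: gen_lub; first by apply: submod_isum; apply: submod_gen.
  move=> a; rewrite mem_cat => /orP [] ha.
  + by apply: isum_l; [apply: sm0; apply: submod_gen | apply: gen_in].
  + by apply: isum_r; [apply: sm0; apply: submod_gen | apply: gen_in].
- apply: isum_lub; first exact: submod_gen.
  + by apply: gen_lub; first exact: submod_gen; move=> a ha; apply: gen_in; rewrite mem_cat ha.
  + by apply: gen_lub; first exact: submod_gen; move=> a ha; apply: gen_in; rewrite mem_cat ha orbT.
Qed.

Lemma gen_mul s t :
  seq_ (gen D [seq a * b | a <- s, b <- t]) (iprod D (gen D s) (gen D t)).
Proof.
set G := gen D _.
split.
- apply: gen_lub; first exact: submod_iprod.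
  move=> z /allpairsP [[a b] [/= ha hb ->]].
  by apply: iprod_mul; apply: gen_in.
- apply: iprod_lub; first exact: submod_gen.
  have h1 : forall a, a \in s -> sub (gen D t) (fun b => G (a * b)).
    move=> a ha; apply: gen_lub; first by apply: submod_mull; apply: submod_gen.
    by move=> b hb; apply: gen_in; apply/allpairsP; exists (a, b).
  have h2 : sub (gen D s) (fun a => forall b, gen D t b -> G (a * b)).
    apply: gen_lub; last by move=> a ha b hb; apply: h1.
    split.
    + by move=> b _; rewrite mul0r; apply: sm0; apply: submod_gen.
    + by move=> a1 a2 h3 h4 b hb; rewrite mulrDl; apply: (@smD G); [apply: submod_gen|auto|auto].
    + by move=> d a hd ha b hb; rewrite -mulrA; apply: (@smM G); [apply: submod_gen|done|auto].
  by move=> a b ha hb; apply: h2.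
Qed.

Lemma denom (s : seq K) : exists d, [/\ D d, d != 0 & forall a, a \in s -> D (d * a)].
Proof.
elim: s => [|a s [d [hd hd0 hs]]].
  by exists 1; split => //; [exact: D1 | exact: oner_neq0].
case: hD => _ _ _ _ hq; have [c [b [hc hb hb0 ha]]] := hq a.
exists (b * d); split; [exact: DM | exact: mulf_neq0 |].
move=> x; rewrite inE => /orP [/eqP -> | hx].
  have -> : b * d * a = d * (b * a) by ring.
  have -> : b * a = c by rewrite ha mulrC divfK.
  exact: DM.
by rewrite -mulrA; apply: DM => //; apply: hs.
Qed.

Lemma frac_gen s a : a \in s -> a != 0 -> frac (gen D s).
Proof.
move=> ha ha0; split; first exact: submod_gen.
  by exists a; split => //; apply: gen_in.
have [d [hd hd0 hs]] := denom s.
exists d; split => //; apply: gen_lub => //.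
split; first by rewrite mulr0; apply: D0.
- by move=> x y hx hy; rewrite mulrDr; apply: DD.
- by move=> e x he hx; rewrite mulrCA; apply: DM.
Qed.

Lemma gen1 : seq_ (gen D [:: 1]) D.
Proof.
split.
- by apply: gen_lub; [exact: submod_D | move=> a; rewrite inE => /eqP ->; exact: D1].
- move=> x hx; rewrite -(mulr1 x); apply: (@smM (gen D [:: 1])) => //; first exact: submod_gen.
  by apply: gen_in; rewrite inE.
Qed.

Lemma star_prod_lr X Y : frac X -> frac Y ->
  seq_ (star (iprod D (star X) (star Y))) (star (iprod D X Y)).
Proof.
move=> hX hY; apply: sqtrans (star_prod_l hX hY).
exact: star_prod_r (star_frac hX) hY.
Qed.
Lemma star_sum_lr X Y : frac X -> frac Y ->
  seq_ (star (isum (star X) (star Y))) (star (isum X Y)).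
Proof.
move=> hX hY; apply: sqtrans (star_sum_l hX hY).
exact: star_sum_r (star_frac hX) hY.
Qed.

Lemma star_prod_cong X X' Y Y' : frac X -> frac Y -> frac X' -> frac Y' ->
  seq_ (star X) (star X') -> seq_ (star Y) (star Y') ->
  seq_ (star (iprod D X Y)) (star (iprod D X' Y')).
Proof.
move=> hX hY hX' hY' e1 e2.
apply: sqtrans (sqsym (star_prod_lr hX hY)) _.
apply: sqtrans (star_prod_lr hX' hY').
apply: star_seteq; first by apply: frac_iprod; apply: star_frac.
exact: iprod_seteq.
Qed.
Lemma star_sum_cong X X' Y Y' : frac X -> frac Y -> frac X' -> frac Y' ->
  seq_ (star X) (star X') -> seq_ (star Y) (star Y') ->
  seq_ (star (isum X Y)) (star (isum X' Y')).
Proof.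
move=> hX hY hX' hY' e1 e2.
apply: sqtrans (sqsym (star_sum_lr hX hY)) _.
apply: sqtrans (star_sum_lr hX' hY').
apply: star_seteq; first by apply: frac_isum; apply: star_frac.
exact: isum_seteq.
Qed.

Definition ftp X := exists s, frac (gen D s) /\ seq_ (star X) (star (gen D s)).

Lemma ftp_seteq X Y : frac X -> seq_ X Y -> ftp X -> ftp Y.
Proof.
move=> hX e [s [hs e2]]; exists s; split => //.
exact: sqtrans (sqsym (star_seteq hX e)) e2.
Qed.

Lemma ftp_sum X Y : frac X -> frac Y -> ftp X -> ftp Y -> ftp (isum X Y).
Proof.
move=> hX hY [s [hs e1]] [t [ht e2]].
have hst : frac (isum (gen D s) (gen D t)) by apply: frac_isum.
exists (s ++ t); split; first exact: frac_seteq hst (sqsym (gen_cat s t)).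
apply: sqtrans (star_sum_cong hX hY hs ht e1 e2) _.
exact: star_seteq hst (sqsym (gen_cat s t)).
Qed.

Lemma ftp_prod X Y : frac X -> frac Y -> ftp X -> ftp Y -> ftp (iprod D X Y).
Proof.
move=> hX hY [s [hs e1]] [t [ht e2]].
have hst : frac (iprod D (gen D s) (gen D t)) by apply: frac_iprod.
exists [seq a * b | a <- s, b <- t]; split; first exact: frac_seteq hst (sqsym (gen_mul s t)).
apply: sqtrans (star_prod_cong hX hY hs ht e1 e2) _.
exact: star_seteq hst (sqsym (gen_mul s t)).
Qed.

Lemma ftp_D : ftp D.
Proof.
exists [:: 1]; split; first exact: frac_seteq frac_D (sqsym gen1).
exact: star_seteq frac_D (sqsym gen1).
Qed.

Lemma ft_ftp I : finite_type D star I -> ftp I.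
Proof.
case=> [[hI eI] [J [hJ [s es] eJ]]].
exists s; split; first exact: frac_seteq hJ es.
apply: sqtrans eI (sqtrans eJ _).
exact: star_seteq hJ es.
Qed.

Lemma ftp_ft X : frac X -> ftp X -> finite_type D star (star X).
Proof.
move=> hX [s [hs e]]; split; first exact: star_star_ideal.
by exists (gen D s); split => //; exists s; exact: sqrefl.
Qed.

Lemma comax_iff A B : frac A -> frac B -> integral D A -> integral D B ->
  star_comaximal D star A B <-> star (isum A B) 1.
Proof.
move=> hA hB iA iB; have hAB := frac_isum hA hB.
split; first by case=> _ h; apply: h; exact: D1.
move=> h1; apply: D_of_1 => //; first exact: star_sub.
apply: star_integral => //; exact: integral_isum submod_D iA iB.
Qed.

Lemma comax_sym A B : frac A -> frac B ->
  star_comaximal D star A B -> star_comaximal D star B A.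
Proof.
move=> hA hB h; apply: sqtrans h.
exact: star_seteq (frac_isum hB hA) (isum_comm _ _).
Qed.

Lemma comax_D A : frac A -> integral D A -> star_comaximal D star A D.
Proof.
move=> hA iA; apply/(comax_iff hA frac_D iA (@sbrefl D)).
apply: star_ext; first exact: frac_isum hA frac_D.
by apply: isum_r; [apply: sm0; case: hA | exact: D1].
Qed.

Lemma comax_prod A X Y : frac A -> frac X -> frac Y ->
  integral D A -> integral D X -> integral D Y ->
  star_comaximal D star A X -> star_comaximal D star A Y ->
  star_comaximal D star A (iprod D X Y).
Proof.
move=> hA hX hY iA iX iY c1 c2.
have hXY := frac_iprod hX hY.
apply/comax_iff => //; first exact: integral_iprod.
have hAX := frac_isum hA hX; have hAY := frac_isum hA hY.
have hP := frac_iprod hAX hAY.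
have h1 : star (iprod D (isum A X) (isum A Y)) 1.
  apply: (proj1 (star_prod_lr hAX hAY)).
  apply: (proj2 (star_seteq (frac_iprod (star_frac hAX) (star_frac hAY))
            (iprod_seteq c1 c2))).
  apply: star_ext; first exact: frac_iprod frac_D frac_D.
  by rewrite -(mulr1 1); apply: iprod_mul; exact: D1.
move: h1; apply: star_mono => //; first exact: frac_isum.
by apply: distr3 => //; case: hA.
Qed.

Lemma frac_iprodn n F : (forall i, (i < n)%N -> frac (F i)) -> frac (iprodn D n F).
Proof.
elim: n => [|n IH] h /=; first exact: frac_D.
by apply: frac_iprod; [apply: IH => i hi; apply: h; apply: ltnW | apply: h].
Qed.
Lemma integral_iprodn n F : (forall i, (i < n)%N -> integral D (F i)) ->
  integral D (iprodn D n F).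
Proof.
elim: n => [|n IH] h /=; first exact: sbrefl.
by apply: integral_iprod; [apply: IH => i hi; apply: h; apply: ltnW | apply: h].
Qed.
Lemma submod_iprodn n F : smod (iprodn D n F).
Proof. by case: n => [|n] /=; [exact: submod_D | exact: submod_iprod]. Qed.
Lemma iprodn_seteq n F G : (forall i, (i < n)%N -> seq_ (F i) (G i)) ->
  seq_ (iprodn D n F) (iprodn D n G).
Proof.
elim: n => [|n IH] h /=; first exact: sqrefl.
by apply: iprod_seteq; [apply: IH => i hi; apply: h; apply: ltnW | apply: h].
Qed.
Lemma ftp_iprodn n F : (forall i, (i < n)%N -> frac (F i) /\ ftp (F i)) ->
  ftp (iprodn D n F).
Proof.
elim: n => [|n IH] h /=; first exact: ftp_D.
have hF : forall i, (i < n)%N -> frac (F i) by move=> i hi; case: (h i (ltnW hi)).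
have [fn tn] := h n (ltnSn n).
apply: ftp_prod => //; first exact: frac_iprodn.
by apply: IH => i hi; apply: h; apply: ltnW.
Qed.
Lemma iprodn_sub n F j : (forall i, (i < n)%N -> smod (F i) /\ integral D (F i)) ->
  (j < n)%N -> sub (iprodn D n F) (F j).
Proof.
elim: n => [|n IH] h hj //=.
have hi : forall i, (i < n)%N -> integral D (F i) by move=> i hi; case: (h i (ltnW hi)).
rewrite ltnS leq_eqVlt in hj; case/orP: hj => [/eqP -> | hj].
  by apply: iprod_sub_r; [exact: integral_iprodn | case: (h n (ltnSn n))].
apply: sbtrans (IH _ hj); last by move=> i hi'; apply: h; apply: ltnW.
by apply: iprod_sub_l; [exact: submod_iprodn | case: (h n (ltnSn n))].
Qed.
Lemma iprodn_allD n F : (forall i, (i < n)%N -> seq_ (F i) D) -> seq_ (iprodn D n F) D.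
Proof.
elim: n => [|n IH] h /=; first exact: sqrefl.
apply: sqtrans (iprod_seteq (IH _) (h n (ltnSn n))) _.
  by move=> i hi; apply: h; apply: ltnW.
exact: iprod_D submod_D.
Qed.

Lemma iprod_ACA A B C E :
  seq_ (iprod D (iprod D A B) (iprod D C E)) (iprod D (iprod D A C) (iprod D B E)).
Proof.
apply: sqtrans (iprod_assoc _ _ _) _.
apply: sqtrans (iprod_seteq (sqrefl A) (sqsym (iprod_assoc _ _ _))) _.
apply: sqtrans (iprod_seteq (sqrefl A) (iprod_seteq (iprod_comm _ _) (sqrefl E))) _.
apply: sqtrans (iprod_seteq (sqrefl A) (iprod_assoc _ _ _)) _.
exact: sqsym (iprod_assoc _ _ _).
Qed.

Lemma iprodn_mul n F G :
  seq_ (iprodn D n (fun i => iprod D (F i) (G i))) (iprod D (iprodn D n F) (iprodn D n G)).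
Proof.
elim: n => [|n IH] /=; first exact: sqsym (iprod_D submod_D).
apply: sqtrans (iprod_seteq IH (sqrefl _)) _.
exact: iprod_ACA.
Qed.

Lemma comax_iprodn A n F : frac A -> integral D A ->
  (forall i, (i < n)%N -> [/\ frac (F i), integral D (F i) & star_comaximal D star A (F i)]) ->
  star_comaximal D star A (iprodn D n F).
Proof.
move=> hA iA; elim: n => [|n IH] h /=; first exact: comax_D.
have hF : forall i, (i < n)%N -> frac (F i) by move=> i hi; case: (h i (ltnW hi)).
have iF : forall i, (i < n)%N -> integral D (F i) by move=> i hi; case: (h i (ltnW hi)).
have [f1 i1 c1] := h n (ltnSn n).
apply: comax_prod => //; [exact: frac_iprodn | exact: integral_iprodn |].
by apply: IH => i hi; apply: h; apply: ltnW.
Qed.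

Definition restr (p : nat -> Prop) (H : nat -> K -> Prop) (i : nat) : K -> Prop :=
  fun x => (p i /\ H i x) \/ (~ p i /\ D x).

Lemma restr_on p H i : p i -> seq_ (restr p H i) (H i).
Proof.
move=> hp; split; first by move=> x [[_ h] | [h _]].
by move=> x hx; left.
Qed.
Lemma restr_off p H i : ~ p i -> seq_ (restr p H i) D.
Proof.
move=> hp; split; first by move=> x [[h _] | [_ h]].
by move=> x hx; right.
Qed.

Lemma restr_split p q H i : smod (H i) ->
  seq_ (restr p H i) (iprod D (restr (fun k => p k /\ q k) H i) (restr (fun k => p k /\ ~ q k) H i)).
Proof.
move=> hH.
have [hp|hp] := classic (p i); last first.
  apply: sqtrans (restr_off _ hp) _.
  apply: sqtrans (sqsym (iprod_D submod_D)) _.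
  by apply: iprod_seteq; apply: sqsym; apply: restr_off; case.
have [hq|hq] := classic (q i).
  apply: sqtrans (restr_on _ hp) _.
  apply: sqtrans (sqsym (iprod_D hH)) _.
  apply: iprod_seteq; apply: sqsym; first exact: restr_on.
  by apply: restr_off; case.
apply: sqtrans (restr_on _ hp) _.
apply: sqtrans (sqsym (iprod_D_l hH)) _.
apply: iprod_seteq; apply: sqsym; last exact: restr_on.
by apply: restr_off; case.
Qed.

Lemma restr_single n F i : (i < n)%N -> smod (F i) ->
  seq_ (iprodn D n (restr (fun k => k = i) F)) (F i).
Proof.
move=> hi hF; elim: n hi => [|n IH] //= hi.
rewrite ltnS leq_eqVlt in hi; case/orP: hi => [/eqP e | hi].
  subst i.
  have e1 : seq_ (iprodn D n (restr (fun k => k = n) F)) D.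
    by apply: iprodn_allD => k hk; apply: restr_off => e'; rewrite e' ltnn in hk.
  have e2 : seq_ (restr (fun k => k = n) F n) (F n) by apply: restr_on.
  apply: sqtrans (iprod_seteq e1 e2) _.
  exact: iprod_D_l.
have e2 : seq_ (restr (fun k => k = i) F n) D.
  by apply: restr_off => e; rewrite e ltnn in hi.
apply: sqtrans (iprod_seteq (IH hi) e2) _.
exact: iprod_D.
Qed.


Section HomogLemmas.
Variable H : K -> Prop.
Hypothesis hH : star_homog D star H.
Lemma hom_frac : frac H. Proof. by case: hH => _ [h _] _ _. Qed.
Lemma hom_int : integral D H. Proof. by case: hH => [[h _]] _ _ _. Qed.
Lemma hom_not1 : ~ H 1. Proof. by case: hH => [[_ h]] _ _ _. Qed.
Lemma hom_star : seq_ (star H) H. Proof. by case: hH => _ [_ h] _ _. Qed.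
Lemma hom_ftp : ftp H. Proof. by case: hH => _ _ h _; exact: ft_ftp. Qed.
Lemma hom_smod : smod H. Proof. by case: hom_frac. Qed.
End HomogLemmas.

Lemma ftp_star X : frac X -> ftp X -> ftp (star X).
Proof.
move=> hX [s [hs e]]; exists s; split => //.
exact: sqtrans (star_idem hX) e.
Qed.

Lemma comax_seteq A B A' B' : frac A -> frac B -> seq_ A A' -> seq_ B B' ->
  star_comaximal D star A B -> star_comaximal D star A' B'.
Proof.
move=> hA hB e1 e2 h; apply: sqtrans h.
exact: sqsym (star_seteq (frac_isum hA hB) (isum_seteq e1 e2)).
Qed.

Definition rel H X := ~ star (isum H X) 1.

Lemma rel_sym X Y : frac X -> frac Y -> rel X Y -> rel Y X.
Proof.
move=> hX hY h1 h2; apply: h1.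
exact: (proj1 (star_seteq (frac_isum hY hX) (isum_comm _ _))).
Qed.

Lemma rel_refl H : star_homog D star H -> rel H H.
Proof.
move=> hH h; apply: (hom_not1 hH); apply: (proj1 (hom_star hH)).
move: h; apply: star_mono; [exact: frac_isum (hom_frac hH) (hom_frac hH) | exact: hom_frac |].
by apply: isum_lub; [exact: hom_smod | exact: sbrefl | exact: sbrefl].
Qed.

Lemma relT H X Y : star_homog D star H -> frac X -> frac Y ->
  integral D X -> integral D Y -> ftp X -> ftp Y ->
  rel H X -> rel H Y -> rel X Y.
Proof.
move=> hH hX hY iX iY tX tY r1 r2 hXY.
have fH := hom_frac hH; have iH := hom_int hH.
have fHX := frac_isum fH hX; have fHY := frac_isum fH hY.
have pA : proper_integral D (star (isum H X)).
  by split => //; apply: star_integral => //; exact: integral_isum submod_D iH iX.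
have pB : proper_integral D (star (isum H Y)).
  by split => //; apply: star_integral => //; exact: integral_isum submod_D iH iY.
have sA := star_star_ideal fHX; have sB := star_star_ideal fHY.
have tA : finite_type D star (star (isum H X)).
  by apply: ftp_ft => //; apply: ftp_sum => //; exact: hom_ftp.
have tB : finite_type D star (star (isum H Y)).
  by apply: ftp_ft => //; apply: ftp_sum => //; exact: hom_ftp.
have HA : sub H (star (isum H X)).
  by apply: sbtrans (star_ext fHX); apply: isum_l; apply: sm0; case: hX.
have HB : sub H (star (isum H Y)).
  by apply: sbtrans (star_ext fHY); apply: isum_l; apply: sm0; case: hY.
case: hH => _ _ _ hh; apply: (hh _ _ pA sA tA pB sB tB HA HB).
have fA := star_frac fHX; have fB := star_frac fHY.
apply/(comax_iff fA fB (proj1 pA) (proj1 pB)).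
move: hXY; apply: star_mono; [exact: frac_isum | exact: frac_isum |].
apply: isum_mono.
- by apply: sbtrans (star_ext fHX); apply: isum_r; apply: sm0; case: fH.
- by apply: sbtrans (star_ext fHY); apply: isum_r; apply: sm0; case: fH.
Qed.

Lemma not_rel_comax A B : frac A -> frac B -> integral D A -> integral D B ->
  ~ rel A B -> star_comaximal D star A B.
Proof.
move=> hA hB iA iB h; apply/comax_iff => //.
by apply: NNPP.
Qed.

Lemma restr_frac p H i : (p i -> frac (H i)) -> frac (restr p H i).
Proof.
move=> h; have [hp|hp] := classic (p i).
  exact: frac_seteq (h hp) (sqsym (restr_on _ hp)).
exact: frac_seteq frac_D (sqsym (restr_off _ hp)).
Qed.
Lemma restr_int p H i : (p i -> integral D (H i)) -> integral D (restr p H i).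
Proof. by move=> h x [[hp hx] | [_ hx]] //; apply: h. Qed.
Lemma restr_ftp p H i : (p i -> frac (H i) /\ ftp (H i)) -> ftp (restr p H i).
Proof.
move=> h; have [hp|hp] := classic (p i).
  by case: (h hp) => f t; exact: ftp_seteq f (sqsym (restr_on _ hp)) t.
exact: ftp_seteq frac_D (sqsym (restr_off _ hp)) ftp_D.
Qed.

Lemma restr_split2 p p1 p2 H i : (p i -> smod (H i)) -> (p i <-> p1 i \/ p2 i) -> ~ (p1 i /\ p2 i) ->
  seq_ (restr p H i) (iprod D (restr p1 H i) (restr p2 H i)).
Proof.
move=> hH e ex.
have [h1|h1] := classic (p1 i).
  have hp : p i by apply/e; left.
  have h2 : ~ p2 i by move=> h2; apply: ex.
  apply: sqtrans (restr_on _ hp) _.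
  apply: sqtrans (sqsym (iprod_D (hH hp))) _.
  by apply: iprod_seteq; apply: sqsym; [exact: restr_on | exact: restr_off].
have [h2|h2] := classic (p2 i).
  have hp : p i by apply/e; right.
  apply: sqtrans (restr_on _ hp) _.
  apply: sqtrans (sqsym (iprod_D_l (hH hp))) _.
  by apply: iprod_seteq; apply: sqsym; [exact: restr_off | exact: restr_on].
have hp : ~ p i by move/e => [].
apply: sqtrans (restr_off _ hp) _.
apply: sqtrans (sqsym (iprod_D submod_D)) _.
by apply: iprod_seteq; apply: sqsym; exact: restr_off.
Qed.

Lemma iprodn_split n p p1 p2 H : (forall i, (i < n)%N -> p i -> smod (H i)) ->
  (forall i, p i <-> p1 i \/ p2 i) -> (forall i, ~ (p1 i /\ p2 i)) ->
  seq_ (iprodn D n (restr p H)) (iprod D (iprodn D n (restr p1 H)) (iprodn D n (restr p2 H))).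
Proof.
move=> hH e ex.
apply: sqtrans (iprodn_mul n (restr p1 H) (restr p2 H)).
apply: iprodn_seteq => i hi; apply: restr_split2; auto.
Qed.

Lemma restr_true n H : seq_ (iprodn D n H) (iprodn D n (restr (fun _ => True) H)).
Proof. by apply: iprodn_seteq => i _; apply: sqsym; apply: restr_on. Qed.

Lemma prod_decomp m G j : (j < m)%N -> (forall i, (i < m)%N -> smod (G i)) ->
  seq_ (iprodn D m G) (iprod D (G j) (iprodn D m (restr (fun l => l <> j) G))).
Proof.
move=> hj hG.
apply: sqtrans (restr_true m G) _.
apply: sqtrans (iprodn_split (p1 := fun l => l = j) (p2 := fun l => l <> j) (fun i hi _ => hG i hi) _ _) _.
- by move=> i; split => // _; apply: classic.
- by move=> i [].
apply: iprod_seteq; last exact: sqrefl.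
by apply: restr_single => //; apply: hG.
Qed.

Section Fact.
Variable I : K -> Prop.
Variable n : nat.
Variable F : nat -> K -> Prop.
Hypothesis hF : homog_factorization D star I n F.

Lemma fac_hom i : (i < n)%N -> star_homog D star (F i).
Proof. by case: hF => h _ _; apply: h. Qed.
Lemma fac_frac i : (i < n)%N -> frac (F i).
Proof. by move=> hi; apply: hom_frac; apply: fac_hom. Qed.
Lemma fac_eq : seq_ I (star (iprodn D n F)).
Proof. by case: hF. Qed.
Lemma fac_comax i j : (i < n)%N -> (j < n)%N -> i <> j -> star_comaximal D star (F i) (F j).
Proof. by case: hF => _ h _; apply: h. Qed.
Lemma fac_fracP : frac (iprodn D n F).
Proof. by apply: frac_iprodn => i hi; exact: fac_frac. Qed.
Lemma fac_sub i : (i < n)%N -> sub I (F i).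
Proof.
move=> hi; apply: sbtrans (proj1 fac_eq) _.
apply: sbtrans (proj1 (hom_star (fac_hom hi))).
apply: star_mono; [exact: fac_fracP | exact: fac_frac |].
apply: iprodn_sub => // k hk; split; [exact: (hom_smod (fac_hom hk)) | exact: (hom_int (fac_hom hk))].
Qed.
End Fact.


Lemma core I n F m G i j :
  homog_factorization D star I n F -> homog_factorization D star I m G ->
  (i < n)%N -> (j < m)%N -> rel (F i) (G j) -> sub (G j) (F i).
Proof.
move=> hF hG hi hj r.
have hFi := fac_hom hF hi; have hGj := fac_hom hG hj.
have fFi := hom_frac hFi; have iFi := hom_int hFi.
have fGj := hom_frac hGj; have iGj := hom_int hGj.
have fG : forall l, (l < m)%N -> frac (G l) by move=> l hl; exact (fac_frac hG hl).
have gG : forall l, (l < m)%N -> star_homog D star (G l) by move=> l hl; exact (fac_hom hG hl).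
set Q := iprodn D m (restr (fun l => l <> j) G).
have fR : forall l, (l < m)%N -> frac (restr (fun l => l <> j) G l).
  by move=> l hl; apply: restr_frac => _; exact: fG.
have iR : forall l, (l < m)%N -> integral D (restr (fun l => l <> j) G l).
  by move=> l hl; apply: restr_int => _; exact (hom_int (gG l hl)).
have fQ : frac Q by exact: frac_iprodn.
have iQ : integral D Q by exact: integral_iprodn.
have cFQ : star_comaximal D star (F i) Q.
  apply: comax_iprodn => // l hl; split; [exact: fR | exact: iR |].
  have [e|ne] := classic (l = j).
    apply: comax_seteq (comax_D fFi iFi); [exact: fFi | exact: frac_D | exact: sqrefl |].
    by apply: sqsym; apply: restr_off => h; apply: h.
  apply: comax_seteq (sqrefl _) (sqsym (restr_on _ ne)) _; [exact: fFi | exact: fG |].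
  apply: not_rel_comax => //; [exact: fG | exact: hom_int (gG l hl) |] => r2.
  have := relT hFi fGj (fG l hl) iGj (hom_int (gG l hl)) (hom_ftp hGj) (hom_ftp (gG l hl)) r r2.
  apply; apply/(comax_iff fGj (fG l hl) iGj (hom_int (gG l hl))).
  by apply (fac_comax hG hj hl) => e; apply: ne.
have fFQ := frac_isum fFi fQ.
move=> x hx.
have S2 : iprod D (G j) (star (isum (F i) Q)) x.
  rewrite -(mulr1 x); apply: iprod_mul => //.
  by apply: (proj2 cFQ); exact: D1.
have S3 := star_ext (frac_iprod fGj (star_frac fFQ)) S2.
have S4 := proj1 (star_prod_r fGj fFQ) _ S3.
have S5 : star (isum (iprod D (G j) (F i)) (iprod D (G j) Q)) x.
  move: S4; apply: star_mono; [exact: frac_iprod | |exact: iprod_isum_distr].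
  by apply: frac_isum; apply: frac_iprod.
apply: (proj1 (hom_star hFi)); move: S5; apply: star_mono => //.
  by apply: frac_isum; apply: frac_iprod.
apply: isum_lub; [exact: hom_smod | exact: iprod_sub_r (hom_smod hFi) |].
apply: sbtrans (fac_sub hF hi).
apply: sbtrans (proj2 (fac_eq hG)).
apply: sbtrans (star_ext (fac_fracP hG)).
apply: (proj2 (prod_decomp hj _)) => l hl; exact (hom_smod (gG l hl)).
Qed.

Lemma exists_rel I n F m G i :
  homog_factorization D star I n F -> homog_factorization D star I m G ->
  (i < n)%N -> exists j, (j < m)%N /\ rel (F i) (G j).
Proof.
move=> hF hG hi; apply: NNPP => hn.
have hFi := fac_hom hF hi; have fFi := hom_frac hFi; have iFi := hom_int hFi.
have fP := fac_fracP hG.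
have iP : integral D (iprodn D m G).
  by apply: integral_iprodn => l hl; exact (hom_int (fac_hom hG hl)).
have c : star_comaximal D star (F i) (iprodn D m G).
  apply: comax_iprodn => // l hl.
  have gl := fac_hom hG hl; split; [exact: hom_frac | exact: hom_int |].
  apply: not_rel_comax => //; [exact: hom_frac | exact: hom_int |] => r.
  by apply: hn; exists l.
have := proj1 (comax_iff fFi fP iFi iP) c.
move=> h1; apply: (hom_not1 hFi); apply: (proj1 (hom_star hFi)); move: h1.
apply: star_mono => //; first exact: frac_isum.
apply: isum_lub; [exact: hom_smod | exact: sbrefl |].
apply: sbtrans (fac_sub hF hi).
apply: sbtrans (proj2 (fac_eq hG)).
exact: star_ext.
Qed.

Lemma match_fac I n F m G i :
  homog_factorization D star I n F -> homog_factorization D star I m G ->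
  (i < n)%N -> exists j, (j < m)%N /\ seq_ (F i) (G j).
Proof.
move=> hF hG hi; have [j [hj r]] := exists_rel hF hG hi.
exists j; split => //; split; last exact (core hF hG hi hj r).
exact (core hG hF hj hi (rel_sym (fac_frac hF hi) (fac_frac hG hj) r)).
Qed.

Lemma exists_inj I n F m G :
  homog_factorization D star I n F -> homog_factorization D star I m G ->
  exists sigma : nat -> nat,
    [/\ (forall i, (i < n)%N -> (sigma i < m)%N),
        (forall i j, (i < n)%N -> (j < n)%N -> sigma i = sigma j -> i = j) &
        (forall i, (i < n)%N -> seq_ (F i) (G (sigma i)))].
Proof.
move=> hF hG.
have hx : forall i, exists j, (i < n)%N -> (j < m)%N /\ seq_ (F i) (G j).
  move=> i; have [hi|hi] := boolP (i < n)%N.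
    by have [j hj] := match_fac hF hG hi; exists j.
  by exists 0%N.
exists (fun i => proj1_sig (constructive_indefinite_description _ (hx i))).
split.
- by move=> i hi; case: (constructive_indefinite_description _ (hx i)) => j /= /(_ hi) [].
- move=> i k hi hk.
  case: (constructive_indefinite_description _ (hx i)) => j /= /(_ hi) [_ e1].
  case: (constructive_indefinite_description _ (hx k)) => j' /= /(_ hk) [_ e2] ejj.
  subst j'; apply: NNPP => ne.
  have hFi := fac_hom hF hi; have hFk := fac_hom hF hk.
  have c := fac_comax hF hi hk ne.
  have fi := hom_frac hFi; have fk := hom_frac hFk.
  have := proj1 (comax_iff fi fk (hom_int hFi) (hom_int hFk)) c.
  move=> h1; apply: (hom_not1 hFi); apply: (proj1 (hom_star hFi)); move: h1.
  apply: star_mono => //; first exact: frac_isum.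
  apply: isum_lub; [exact: hom_smod | exact: sbrefl |].
  exact: sbtrans (proj1 e2) (proj2 e1).
- by move=> i hi; case: (constructive_indefinite_description _ (hx i)) => j /= /(_ hi) [].
Qed.

Lemma inj_le n m (f : nat -> nat) : (forall i, (i < n)%N -> (f i < m)%N) ->
  (forall i j, (i < n)%N -> (j < n)%N -> f i = f j -> i = j) -> (n <= m)%N.
Proof.
move=> hb hi.
have u : uniq (map f (iota 0 n)).
  rewrite map_inj_in_uniq ?iota_uniq // => a b; rewrite !mem_iota !add0n.
  by move=> ha hb'; apply: hi.
have := uniq_leq_size u (s2 := iota 0 m).
rewrite size_map !size_iota; apply => y /mapP [x]; rewrite !mem_iota !add0n => hx ->.
exact: hb.
Qed.


Hypothesis hfc : finite_character D star.

Lemma frac_inv I : frac I -> integral D I -> frac (Defs.inv D I).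
Proof.
move=> fI iI; split.
- split.
  + by move=> y hy; rewrite mul0r; exact: D0.
  + by move=> a b ha hb y hy; rewrite mulrDl; apply: DD; auto.
  + by move=> d a hd ha y hy; rewrite -mulrA; apply: DM; auto.
- exists 1; split; last exact: oner_neq0.
  by move=> y hy; rewrite mul1r; apply: iI.
- case: fI => _ [c [hc hc0]] _; exists c; split => //; first by apply: iI.
  by move=> x hx; rewrite mulrC; apply: hx.
Qed.

Lemma gen_subl (u u' : seq K) : (forall a, a \in u -> a \in u') -> sub (gen D u) (gen D u').
Proof. by move=> h; apply: gen_lub; [exact: submod_gen | move=> a /h; exact: gen_in]. Qed.

Lemma inv_ftp I : star_ideal D star I -> integral D I -> star_invertible D star I -> ftp I.
Proof.
move=> [fI eI] iI hinv.
set V := Defs.inv D I.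
have fV := frac_inv fI iI.
have fIV := frac_iprod fI fV.
have h1 : star (iprod D I V) 1 by apply: (proj2 hinv); exact: D1.
have [J [fJ [t et] sJ hJ1]] := proj1 (hfc fIV) 1 h1.
have L : forall z, iprod D I V z ->
    exists u : seq K, (forall a, a \in u -> I a) /\ iprod D (gen D u) V z.
  apply: iprod_lub; last first.
    move=> a b ha hb; exists [:: a]; split.
      by move=> c; rewrite inE => /eqP ->.
    by apply: iprod_mul => //; apply: gen_in; rewrite inE.
  split.
  - by exists [::]; split => //; apply: sm0; apply: submod_iprod.
  - move=> a b [u1 [h1' k1]] [u2 [h2' k2]]; exists (u1 ++ u2); split.
      by move=> c; rewrite mem_cat => /orP []; auto.
    apply: (@smD (iprod D (gen D (u1 ++ u2)) V)); first exact: submod_iprod.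
    + move: k1; apply: iprod_mono; last exact: sbrefl.
      by apply: gen_subl => c hc; rewrite mem_cat hc.
    + move: k2; apply: iprod_mono; last exact: sbrefl.
      by apply: gen_subl => c hc; rewrite mem_cat hc orbT.
  - move=> d a hd [u [h k]]; exists u; split => //.
    by apply: (@smM (iprod D (gen D u) V)) => //; exact: submod_iprod.
have L2 : forall t' : seq K, (forall a, a \in t' -> iprod D I V a) ->
    exists u, (forall a, a \in u -> I a) /\ (forall a, a \in t' -> iprod D (gen D u) V a).
  elim => [|a t' IH] h.
    by exists [::]; split.
  have [u1 [h1' k1]] := L a (h a (mem_head a t')).
  have [u2 [h2' k2]] : exists u, (forall a, a \in u -> I a) /\
      (forall a, a \in t' -> iprod D (gen D u) V a).
    by apply: IH => b hb; apply: h; rewrite inE hb orbT.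
  exists (u1 ++ u2); split.
    by move=> c; rewrite mem_cat => /orP []; auto.
  move=> b; rewrite inE => /orP [/eqP -> | hb].
    move: k1; apply: iprod_mono; last exact: sbrefl.
    by apply: gen_subl => c hc; rewrite mem_cat hc.
  move: (k2 b hb); apply: iprod_mono; last exact: sbrefl.
  by apply: gen_subl => c hc; rewrite mem_cat hc orbT.
have [u [hu hut]] := L2 t (fun a ha => sJ a (proj2 et a (gen_in ha))).
have [c [hc hc0]] : exists c, I c /\ c != 0 by case: fI.
set G := gen D (c :: u).
have fG : frac G := frac_gen (mem_head c u) hc0.
have GI : sub G I.
  apply: gen_lub; first exact: frac_sub.
  by move=> a; rewrite inE => /orP [/eqP -> | /hu].
have tG : sub (gen D t) (iprod D G V).
  apply: gen_lub; first exact: submod_iprod.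
  move=> a ha; move: (hut a ha); apply: iprod_mono; last exact: sbrefl.
  by apply: gen_subl => b hb; rewrite inE hb orbT.
have fGV := frac_iprod fG fV.
have hG1 : star (iprod D G V) 1.
  by apply: (star_mono fJ fGV (sbtrans (proj1 et) tG)).
have iGV : integral D (star (iprod D G V)).
  apply: sbtrans (proj1 hinv); apply: star_mono => //.
  by apply: iprod_mono => //; exact: sbrefl.
have eGV : seq_ (star (iprod D G V)) D := D_of_1 (star_sub fGV) iGV hG1.
exists (c :: u); split => //.
apply: (sqtrans eI); split; last first.
  exact: sbtrans (star_mono fG fI GI) (proj1 eI).
move=> x hx.
have a1 : iprod D I (star (iprod D G V)) x.
  by rewrite -(mulr1 x); apply: iprod_mul => //; apply: (proj2 eGV); exact: D1.
have a2 := star_ext (frac_iprod fI (star_frac fGV)) a1.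
have a3 := proj1 (star_prod_r fI fGV) _ a2.
have eqn : seq_ (iprod D I (iprod D G V)) (iprod D G (iprod D I V)).
  apply: sqtrans (sqsym (iprod_assoc _ _ _)) _.
  apply: sqtrans (iprod_seteq (iprod_comm _ _) (sqrefl _)) _.
  exact: iprod_assoc.
have a4 := proj1 (star_seteq (frac_iprod fI fGV) eqn) _ a3.
have a5 := proj2 (star_prod_r fG fIV) _ a4.
have a6 := proj1 (star_seteq (frac_iprod fG (star_frac fIV)) (iprod_seteq (sqrefl G) hinv)) _ a5.
exact: (proj1 (star_seteq (frac_iprod fG frac_D) (iprod_D (frac_sub fG))) _ a6).
Qed.

Lemma glue I P Q : star_ideal D star I -> integral D I -> frac P -> frac Q ->
  integral D P -> integral D Q -> star_comaximal D star P Q ->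
  sub (star (iprod D P Q)) I ->
  seq_ I (star (iprod D (star (isum I P)) (star (isum I Q)))).
Proof.
move=> [fI eI] iI fP fQ iP iQ c hs.
have fIP := frac_isum fI fP; have fIQ := frac_isum fI fQ.
have fPQ := frac_isum fP fQ.
apply: sqtrans _ (sqsym (star_prod_lr fIP fIQ)); split.
- move=> x hx.
  have b1 : iprod D I (star (isum P Q)) x.
    by rewrite -(mulr1 x); apply: iprod_mul => //; apply: (proj2 c); exact: D1.
  have b2 := star_ext (frac_iprod fI (star_frac fPQ)) b1.
  have b3 := proj1 (star_prod_r fI fPQ) _ b2.
  move: b3; apply: star_mono; [exact: frac_iprod | exact: frac_iprod |].
  by apply: distr2; apply: frac_sub.
- apply: sbtrans (proj1 eI); apply: star_mono; [exact: frac_iprod | exact: fI |].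
  apply: sbtrans (distr3 (frac_sub fI) iI iP iQ) _.
  apply: isum_lub; [exact: frac_sub | exact: sbrefl |].
  exact: sbtrans (star_ext (frac_iprod fP fQ)) hs.
Qed.

Lemma homog_class H0 n F A : star_homog D star H0 ->
  (forall i, (i < n)%N -> seq_ (F i) D \/
     exists H', [/\ seq_ (F i) H', star_homog D star H' & rel H0 H']) ->
  star_ideal D star A -> integral D A -> ~ A 1 -> finite_type D star A ->
  sub (iprodn D n F) A -> star_homog D star A.
Proof.
move=> h0 hF sA iA nA tA hP.
have fA := proj1 sA.
have fF : forall i, (i < n)%N -> frac (F i).
  move=> i hi; case: (hF i hi) => [e | [H' [e hH' _]]].
    exact: frac_seteq frac_D (sqsym e).
  exact: frac_seteq (hom_frac hH') (sqsym e).
have iF : forall i, (i < n)%N -> integral D (F i).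
  move=> i hi; case: (hF i hi) => [e | [H' [e hH' _]]].
    exact: sbtrans (proj1 e) (@sbrefl D).
  exact: sbtrans (proj1 e) (hom_int hH').
have fP := frac_iprodn fF; have iP := integral_iprodn iF.
have key : forall A', proper_integral D A' -> star_ideal D star A' ->
    finite_type D star A' -> sub A A' -> rel H0 A'.
  move=> A' [iA' nA'] sA' tA' hAA' h1.
  have fA' := proj1 sA'.
  have c : star_comaximal D star A' (iprodn D n F).
    apply: comax_iprodn => // i hi; split; [exact: fF | exact: iF |].
    case: (hF i hi) => [e | [H' [e hH' r]]].
      exact: comax_seteq fA' frac_D (sqrefl _) (sqsym e) (comax_D fA' iA').
    apply: (comax_seteq fA' (hom_frac hH') (sqrefl _) (sqsym e)).
    apply: (not_rel_comax fA' (hom_frac hH') iA' (hom_int hH')) => r2.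
    have r3 := rel_sym (hom_frac h0) (hom_frac hH') r.
    have r4 := rel_sym fA' (hom_frac hH') r2.
    exact: (relT hH' (hom_frac h0) fA' (hom_int h0) iA' (hom_ftp h0) (ft_ftp tA') r3 r4 h1).
  have h2 := proj1 (comax_iff fA' fP iA' iP) c.
  apply: nA'; apply: (proj1 (proj2 sA')); move: h2; apply: star_mono => //.
    exact: frac_isum.
  apply: isum_lub; [exact: frac_sub | exact: sbrefl |].
  exact: sbtrans hP hAA'.
split => //.
move=> A' B' pA' sA' tA' pB' sB' tB' hA' hB' c.
have r1 := key A' pA' sA' tA' hA'; have r2 := key B' pB' sB' tB' hB'.
have := relT h0 (proj1 sA') (proj1 sB') (proj1 pA') (proj1 pB') (ft_ftp tA') (ft_ftp tB') r1 r2.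
apply; exact: (proj1 (comax_iff (proj1 sA') (proj1 sB') (proj1 pA') (proj1 pB')) c).
Qed.


Lemma Ex_none n H p I : (forall i, (i < n)%N -> ~ p i) ->
  star_ideal D star I -> integral D I -> sub (star (iprodn D n (restr p H))) I ->
  exists m G, homog_factorization D star I m G.
Proof.
move=> hn [fI eI] iI hs.
have e : seq_ (iprodn D n (restr p H)) D.
  by apply: iprodn_allD => i hi; apply: restr_off; apply: hn.
have fP : frac (iprodn D n (restr p H)).
  by apply: frac_iprodn => i hi; apply: restr_frac => h; case: (hn i hi h).
have I1 : I 1.
  apply: hs; apply: (proj2 (star_seteq fP e)); apply: (proj2 star_D); exact: D1.
exists 0%N, (fun _ => D); split => //.
exact: sqtrans (D_of_1 (frac_sub fI) iI I1) (sqsym star_D).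
Qed.

Lemma Ex (N : nat) : forall (s : seq nat), (size s <= N)%N ->
  forall n (H : nat -> K -> Prop) (p : nat -> Prop) I,
  (forall i, (i < n)%N -> p i -> star_homog D star (H i) /\ i \in s) ->
  star_ideal D star I -> integral D I -> ftp I ->
  sub (star (iprodn D n (restr p H))) I ->
  exists m G, homog_factorization D star I m G.
Proof.
elim: N => [|N IH] s hs n H p I hH sI iI tI hsub.
  have [[k0 [hk0 pk0]] | hn] := classic (exists k0, (k0 < n)%N /\ p k0); last first.
    apply: Ex_none sI iI hsub => i hi pi; apply: hn; by exists i.
  have [_ ks] := hH k0 hk0 pk0.
  by move: hs; rewrite leqn0 => /nilP es; rewrite es in ks.
have [[k0 [hk0 pk0]] | hn] := classic (exists k0, (k0 < n)%N /\ p k0); last first.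
  apply: Ex_none sI iI hsub => i hi pi; apply: hn; by exists i.
have [hH0 k0s] := hH k0 hk0 pk0.
set H0 := H k0.
have fI := proj1 sI.
pose pin := fun i => p i /\ rel H0 (H i).
pose pout := fun i => p i /\ ~ rel H0 (H i).
have hh : forall i, (i < n)%N -> p i -> star_homog D star (H i).
  by move=> i hi pi; case: (hH i hi pi).
have fin : forall i, (i < n)%N -> frac (restr pin H i).
  by move=> i hi; apply: restr_frac => h; exact: (hom_frac (hh i hi (proj1 h))).
have fout : forall i, (i < n)%N -> frac (restr pout H i).
  by move=> i hi; apply: restr_frac => h; exact: (hom_frac (hh i hi (proj1 h))).
have iin : forall i, (i < n)%N -> integral D (restr pin H i).
  by move=> i hi; apply: restr_int => h; exact: (hom_int (hh i hi (proj1 h))).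
have iout : forall i, (i < n)%N -> integral D (restr pout H i).
  by move=> i hi; apply: restr_int => h; exact: (hom_int (hh i hi (proj1 h))).
set Pin := iprodn D n (restr pin H).
set Pout := iprodn D n (restr pout H).
have fPin : frac Pin by exact: frac_iprodn.
have fPout : frac Pout by exact: frac_iprodn.
have iPin : integral D Pin by exact: integral_iprodn.
have iPout : integral D Pout by exact: integral_iprodn.
have tPin : ftp Pin.
  apply: ftp_iprodn => i hi; split; first exact: fin.
  by apply: restr_ftp => h; split; [exact: (hom_frac (hh i hi (proj1 h))) | exact: (hom_ftp (hh i hi (proj1 h)))].
have tPout : ftp Pout.
  apply: ftp_iprodn => i hi; split; first exact: fout.
  by apply: restr_ftp => h; split; [exact: (hom_frac (hh i hi (proj1 h))) | exact: (hom_ftp (hh i hi (proj1 h)))].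
have decomp : seq_ (iprodn D n (restr p H)) (iprod D Pin Pout).
  apply: iprodn_split.
  - by move=> i hi pi; exact: (hom_smod (hh i hi pi)).
  - move=> i; split; last by case=> [[]|[]].
    by move=> pi; have [r|r] := classic (rel H0 (H i)); [left | right].
  - by move=> i [[_ r1] [_ r2]].
have cin : forall j, (j < n)%N -> pin j -> star_comaximal D star (H j) Pout.
  move=> j hj [pj rj]; have hHj := hh j hj pj.
  apply: comax_iprodn; [exact: hom_frac | exact: hom_int |] => i hi.
  split; [exact: fout | exact: iout |].
  have [po|po] := classic (pout i).
    apply: (comax_seteq (hom_frac hHj) (hom_frac (hh i hi (proj1 po))) (sqrefl _) (sqsym (restr_on _ po))).
    apply: (not_rel_comax (hom_frac hHj) (hom_frac (hh i hi (proj1 po))) (hom_int hHj) (hom_int (hh i hi (proj1 po)))) => r.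
    case: po => pi nr; apply: nr.
    apply: (relT hHj (hom_frac hH0) (hom_frac (hh i hi pi)) (hom_int hH0) (hom_int (hh i hi pi)) (hom_ftp hH0) (hom_ftp (hh i hi pi))) => //.
    exact: (rel_sym (hom_frac hH0) (hom_frac hHj) rj).
  exact: (comax_seteq (hom_frac hHj) frac_D (sqrefl _) (sqsym (restr_off _ po)) (comax_D (hom_frac hHj) (hom_int hHj))).
have cPQ : star_comaximal D star Pin Pout.
  apply: (comax_sym fPout fPin).
  apply: comax_iprodn => // j hj; split; [exact: fin | exact: iin |].
  have [pj|pj] := classic (pin j).
    apply: (comax_seteq fPout (hom_frac (hh j hj (proj1 pj))) (sqrefl _) (sqsym (restr_on _ pj))).
    exact: (comax_sym (hom_frac (hh j hj (proj1 pj))) fPout (cin j hj pj)).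
  exact: (comax_seteq fPout frac_D (sqrefl _) (sqsym (restr_off _ pj)) (comax_D fPout iPout)).
have fPQ := frac_iprod fPin fPout.
have hsubPQ : sub (star (iprod D Pin Pout)) I.
  apply: sbtrans hsub.
  apply: (proj2 (star_seteq _ decomp)).
  by apply: frac_iprodn => i hi; apply: restr_frac => pi; exact: (hom_frac (hh i hi pi)).
have gl := glue sI iI fPin fPout iPin iPout cPQ hsubPQ.
have fIout := frac_isum fI fPout.
set B := star (isum I Pout).
have fB : frac B := star_frac fIout.
have sB : star_ideal D star B := star_star_ideal fIout.
have iB : integral D B by apply: star_integral => //; exact: integral_isum submod_D iI iPout.
have tB : ftp B by apply: ftp_star => //; exact: ftp_sum.
have PB : sub Pout B by apply: sbtrans (star_ext fIout); apply: isum_r; exact: (sm0 (frac_sub fI)).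
have hsubB : sub (star Pout) B.
  by apply: sbtrans (star_mono fPout fB PB) (proj1 (star_idem fIout)).
have hsz : (size (rem k0 s) <= N)%N by rewrite size_rem //; case: (size s) hs.
have hHout : forall i, (i < n)%N -> pout i -> star_homog D star (H i) /\ i \in rem k0 s.
  move=> i hi [pi nr]; have [hHi isn] := hH i hi pi; split => //.
  apply: rem_mem => //; apply/eqP => e; apply: nr; rewrite /H0 -e; exact: (rel_refl (hh i hi pi)).
have [m [G hG]] := IH (rem k0 s) hsz n H pout B hHout sB iB tB hsubB.
have fIin := frac_isum fI fPin.
set A := star (isum I Pin).
have fA : frac A := star_frac fIin.
have iA : integral D A by apply: star_integral => //; exact: integral_isum submod_D iI iPin.
have [A1 | nA1] := classic (A 1).
  have eA : seq_ A D := D_of_1 (star_sub fIin) iA A1.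
  have eIB : seq_ I B.
    apply: sqtrans gl _.
    apply: sqtrans (star_seteq (frac_iprod fA fB) (iprod_seteq eA (sqrefl _))) _.
    apply: sqtrans (star_seteq (frac_iprod frac_D fB) (iprod_D_l (frac_sub fB))) _.
    exact: star_idem.
  exists m, G; case: hG => h1 h2 h3; split => //; exact: sqtrans eIB h3.
have PA : sub Pin A by apply: sbtrans (star_ext fIin); apply: isum_r; exact: (sm0 (frac_sub fI)).
have hA : star_homog D star A.
  apply: (homog_class (n := n) (F := restr pin H) hH0) => //.
  - move=> i hi; have [pi|pi] := classic (pin i).
      right; exists (H i); split; [exact: restr_on | exact: (hh i hi (proj1 pi)) | exact: (proj2 pi)].
    by left; exact: restr_off.
  - exact: star_star_ideal.
  - by apply: ftp_ft => //; exact: ftp_sum.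
have cAG : forall j, (j < m)%N -> star_comaximal D star A (G j).
  move=> j hj; have hGj := fac_hom hG hj.
  apply/(comax_iff fA (hom_frac hGj) iA (hom_int hGj)).
  have h1 : star (isum Pin Pout) 1.
    by apply: (proj1 (comax_iff fPin fPout iPin iPout)).
  move: h1; apply: star_mono; [exact: frac_isum | exact: frac_isum (hom_frac hGj) |].
  apply: isum_mono => //; exact: sbtrans PB (fac_sub hG hj).
pose G' := fun i => if (i < m)%N then G i else A.
have e1 : seq_ (iprodn D m G') (iprodn D m G).
  by apply: iprodn_seteq => i hi; rewrite /G' hi; exact: sqrefl.
have fGm := fac_fracP hG.
have fG'm : frac (iprodn D m G') := frac_seteq fGm (sqsym e1).
exists m.+1, G'; split.
- move=> i hi; rewrite /G'; case: ifP => h; first exact: (fac_hom hG h).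
  exact: hA.
- move=> i j hi hj ne; rewrite /G'.
  case: ifP => h1; case: ifP => h2.
  + exact: (fac_comax hG h1 h2 ne).
  + exact: (comax_sym fA (hom_frac (fac_hom hG h1)) (cAG i h1)).
  + exact: cAG.
  + exfalso; apply: ne.
    have ei : i = m by apply/eqP; rewrite eqn_leq -ltnS hi /= leqNgt h1.
    have ej : j = m by apply/eqP; rewrite eqn_leq -ltnS hj /= leqNgt h2.
    by rewrite ei ej.
- rewrite /= {2}/G' ltnn.
  apply: sqtrans gl _.
  apply: sqtrans (star_seteq (frac_iprod fA fB) (iprod_comm _ _)) _.
  apply: (star_prod_cong fB fA fG'm fA _ (sqrefl _)).
  apply: sqtrans (star_idem fIout) _.
  apply: sqtrans (fac_eq hG) _.
  exact: (star_seteq fGm (sqsym e1)).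
Qed.


Lemma main_sec (hSH : star_SH D star) (I : K -> Prop) (hI : star_ideal D star I)
    (hIp : proper_integral D I) (hIinv : star_invertible D star I) :
  exists (n : nat) (F : nat -> K -> Prop),
    homog_factorization D star I n F /\
    forall (m : nat) (G : nat -> K -> Prop),
      homog_factorization D star I m G ->
      m = n /\
      exists sigma : nat -> nat,
        [/\ (forall i, (i < n)%N -> (sigma i < n)%N),
            (forall i j, (i < n)%N -> (j < n)%N -> sigma i = sigma j -> i = j) &
            (forall i, (i < n)%N -> seq_ (F i) (G (sigma i)))].
Proof.
have [iI nI] := hIp.
have fI := proj1 hI.
have tI := inv_ftp hI iI hIinv.
have [x [hx hx0]] : exists x, I x /\ x != 0 by case: fI.
have Dx : D x by apply: iI.
have nu : ~ D x^-1.
  move=> h; apply: nI; rewrite -(mulVf hx0); apply: smM => //; exact: frac_sub.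
have [n [F [hF ex]]] := hSH x Dx hx0 nu.
have fF : frac (iprodn D n F).
  by apply: frac_iprodn => i hi; exact: (hom_frac (hF i hi)).
have hsub : sub (star (iprodn D n (restr (fun _ => True) F))) I.
  apply: sbtrans (proj2 (star_seteq fF (restr_true n F))) _.
  apply: sbtrans (proj2 ex) _.
  by move=> y [d [hd ->]]; apply: smM => //; exact: frac_sub.
have hH : forall i, (i < n)%N -> True -> star_homog D star (F i) /\ i \in iota 0 n.
  by move=> i hi _; split; [exact: hF | rewrite mem_iota add0n].
have [m [G hG]] := Ex (leqnn (size (iota 0 n))) hH hI iI tI hsub.
exists m, G; split => // m' G' hG'.
have [sg [b1 b2 b3]] := exists_inj hG hG'.
have [tau [c1 c2 _]] := exists_inj hG' hG.
have e : m' = m by apply/eqP; rewrite eqn_leq (inj_le b1 b2) (inj_le c1 c2).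
split => //; exists sg; split => //; rewrite -?e //.
move=> i hi; apply: (b1 i); by rewrite -e.
Qed.

End Main.

Unset Implicit Arguments.
Set Strict Implicit.

Theorem mainTheorem16 (K : fieldType) (D : K -> Prop)
    (star : (K -> Prop) -> (K -> Prop))
    (hD : is_domain_with_qf D) (hstar : is_star_op D star)
    (hfc : finite_character D star) (hSH : star_SH D star)
    (I : K -> Prop) (hI : star_ideal D star I) (hIp : proper_integral D I)
    (hIinv : star_invertible D star I) :
  exists (n : nat) (F : nat -> K -> Prop),
    homog_factorization D star I n F /\
    forall (m : nat) (G : nat -> K -> Prop),
      homog_factorization D star I m G ->
      m = n /\
      exists sigma : nat -> nat,
        [/\ (forall i, (i < n)%N -> (sigma i < n)%N),
            (forall i j, (i < n)%N -> (j < n)%N -> sigma i = sigma j -> i = j) &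
            (forall i, (i < n)%N -> seteq (F i) (G (sigma i)))].
Proof. exact: (main_sec hD hstar hfc hSH hI hIp hIinv). Qed.
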